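(* Let $\{x(n)\}_{n\in\mathbb Z}$ be a cyclostationary process of period $P$ with cyclic PSD matrix $\mathbf S_X(\sigma)$, $\sigma\in[0,1/P)$. For each $\sigma\in[0,1/P)$ let $\mathbf b_X^{(p)}(\sigma)=[b_X^{(p)}(0,\sigma),\dots,b_X^{(p)}(P-1,\sigma)]^T$, $p=0,\dots,P-1$, be orthonormal eigenvectors of $\mathbf S_X(\sigma)$ with eigenvalues $\mathcal S_{\mathcal X}^{(p)}(\sigma)$: $$\mathbf S_X(\sigma)\mathbf b_X^{(p)}(\sigma)=\mathcal S_{\mathcal X}^{(p)}(\sigma)\mathbf b_X^{(p)}(\sigma).$$ Define, for $\lambda=\sigma+p/P\in[0,1)$, $$\phi(n,\lambda)=\phi^{(p)}_{\mathrm{CS}}(n,\sigma)=\sum_{q=0}^{P-1}b_X^{(p)}(q,\sigma)e^{j2\pi(\sigma+q/P)n},\qquad \mathcal S_{\mathcal X}(\lambda)=\mathcal S_{\mathcal X}^{(p)}(\sigma).$$ Then $\{\phi(n,\lambda)\}$ is a Karhunen–Loève eigenbasis of $\{x(n)\}$, i.e. it solves the eigenequation $$\sum_{l\in\mathbb Z}R_x(l,k-l)\,\phi(l,\lambda)=\mathcal S_{\mathcal X}(\lambda)\,\phi(k,\lambda)\quad\text{for all }k\in\mathbb Z,\ \lambda\in[0,1),$$ where the sum is understood as $\lim_{N\to\infty}\frac1N\sum_{l=-N/2}^{N/2-1}$ with $1/N\to d\lambda$ (so that both sides are interpreted as measures $\mathcal S_{\mathcal X}(\lambda)\phi(k,\lambda)\,d\lambda$);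 $\mathcal S_{\mathcal X}(\lambda)$ is the KL spectrum.
   Context: Let $\{x(n)\}_{n\in\mathbb Z}$ be a zero-mean, proper ($E[x(n)x(n+m)]=0$), second-order, harmonizable complex discrete-time random process with autocorrelation $R_x(n,m)=E[x(n+m)x^*(n)]$. It is cyclostationary (CS) of period $P\in\mathbb N$ if $R_x(n+lP,m)=R_x(n,m)$ for all $n,m,l\in\mathbb Z$. Its cyclic spectrum is $S_X^{(k/P)}(f)=\frac1P\sum_{n=0}^{P-1}\sum_{m\in\mathbb Z}R_x(n,m)e^{-j2\pi(kn/P+fm)}$ (indices $k$ taken modulo $P$). Its Cramér–Loève (CL) spectral increments are $d\nu_x(f)=\lim_{N\to\infty}\frac1N\sum_{n=-N/2}^{N/2-1}x(n)e^{-j2\pi fn}$, $f\in[0,1)$, so that $x(n)=\int_0^1e^{j2\pi fn}d\nu_x(f)$, and for a CS process $E[d\nu_x(f)d\nu_x^*(f-\alpha)]=\sum_{k=0}^{P-1}S_X^{(k/P)}(f)\delta(\alpha-k/P)\,d\alpha\,df$. The cyclic PSD matrix $\mathbf S_X(\sigma)\in\mathbb C^{P\times P}$, $\sigma\in[0,1/P)$, has entries $[\mathbf S_X(\sigma)]_{r,c}=S_X^{((r-c)/P)}(\sigma+r/P)$, $r,c\in\{0,\dots,P-1\}$; it is Hermitian nonnegative definite. *)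

(* Defs.v *)
From Stdlib Require Import Reals ZArith List.
From Coquelicot Require Import Coquelicot.
Import ListNotations.

Definition cexpi (x : R) : C := (cos x, sin x).

Definition fsum (n : nat) (f : nat -> C) : C :=
  fold_right Cplus (RtoC 0) (map f (seq 0 n)).

Definition zsum (a b : Z) (f : Z -> C) : C :=
  fsum (Z.to_nat (b - a)) (fun i => f (a + Z.of_nat i)%Z).

Definition sym_partial (f : Z -> C) (N : nat) : C :=
  zsum (- Z.of_nat N)%Z (Z.of_nat N) f.

(* "sum_{l in Z} f l = v", as the limit of the symmetric partial sums
   sum_{l=-N}^{N-1} (the convention of the paper) *)
Definition zseries_to (f : Z -> C) (v : C) : Prop :=
  filterlim (sym_partial f) eventually (locally v).

Definition zseries (f : Z -> C) : C :=
  (real (Lim_seq (fun N => fst (sym_partial f N))),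
   real (Lim_seq (fun N => snd (sym_partial f N)))).

Definition abs_summable_Z (g : Z -> C) : Prop :=
  ex_series (fun i => Cmod (g (Z.of_nat i))) /\
  ex_series (fun i => Cmod (g (- Z.of_nat i)%Z)).

(* R_x(n,m) = E[x(n+m) x^*(n)] is cyclostationary of period P *)
Definition cyclostationary (Rx : Z -> Z -> C) (P : nat) : Prop :=
  forall n m l : Z, Rx (n + l * Z.of_nat P)%Z m = Rx n m.

Definition cyc_spec (Rx : Z -> Z -> C) (P : nat) (k : Z) (f : R) : C :=
  Cmult (RtoC (/ INR P))
    (fsum P (fun n =>
       zseries (fun m =>
         Cmult (Rx (Z.of_nat n) m)
               (cexpi (- (2 * PI * (IZR k * INR n / INR P + f * IZR m))))))).

Definition cyc_psd_mx (Rx : Z -> Z -> C) (P : nat) (sigma : R) (r c : nat) : C :=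
  cyc_spec Rx P (Z.of_nat r - Z.of_nat c)%Z (sigma + INR r / INR P).

Definition phiCS (bp : nat -> C) (P : nat) (sigma : R) (n : Z) : C :=
  fsum P (fun q => Cmult (bp q) (cexpi (2 * PI * (sigma + INR q / INR P) * IZR n))).

(* Main.v *)
Require Import Defs.
From Stdlib Require Import Reals ZArith List Lia Lra.
From Coquelicot Require Import Coquelicot.
Import ListNotations.
Open Scope C_scope.

Lemma fsum_0 f : fsum 0 f = 0.
Proof. reflexivity. Qed.

Lemma fsum_S n f : fsum (S n) f = fsum n f + f n.
Proof.
  unfold fsum. rewrite seq_S, map_app, fold_right_app. simpl.
  generalize (map f (seq 0 n)). intro l. induction l; simpl.
  - ring.
  - rewrite IHl. ring.
Qed.

Lemma fsum_Sl n f : fsum (S n) f = f O + fsum n (fun i => f (S i)).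
Proof.
  induction n.
  - rewrite fsum_S, !fsum_0. ring.
  - rewrite fsum_S, IHn, fsum_S. ring.
Qed.

Lemma fsum_ext n f g : (forall i, (i < n)%nat -> f i = g i) -> fsum n f = fsum n g.
Proof.
  induction n; intros H; auto.
  rewrite !fsum_S, IHn by (intros; apply H; lia). rewrite H by lia. auto.
Qed.

Lemma fsum_plus n f g : fsum n (fun i => f i + g i) = fsum n f + fsum n g.
Proof. induction n; [rewrite ?fsum_0; ring|]. rewrite !fsum_S, IHn. ring. Qed.

Lemma fsum_opp n f : fsum n (fun i => - f i) = - fsum n f.
Proof. induction n; [rewrite ?fsum_0; ring|]. rewrite !fsum_S, IHn. ring. Qed.

Lemma fsum_mult_l n c f : fsum n (fun i => c * f i) = c * fsum n f.
Proof. induction n; [rewrite ?fsum_0; ring|]. rewrite !fsum_S, IHn. ring. Qed.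

Lemma fsum_mult_r n c f : fsum n (fun i => f i * c) = fsum n f * c.
Proof. induction n; [rewrite ?fsum_0; ring|]. rewrite !fsum_S, IHn. ring. Qed.

Lemma fsum_const n c : fsum n (fun _ => c) = RtoC (INR n) * c.
Proof.
  induction n; [rewrite fsum_0; simpl; ring|].
  rewrite fsum_S, IHn, S_INR, RtoC_plus. ring.
Qed.

Lemma fsum_swap n m (F : nat -> nat -> C) :
  fsum n (fun i => fsum m (fun j => F i j)) = fsum m (fun j => fsum n (fun i => F i j)).
Proof.
  induction n.
  - rewrite fsum_0, (fsum_ext m _ (fun _ => 0)) by (intros; apply fsum_0).
    rewrite fsum_const. ring.
  - rewrite fsum_S, IHn, <- fsum_plus. apply fsum_ext. intros. rewrite fsum_S. auto.
Qed.

Lemma fsum_delta n j (x : C) : (j < n)%nat ->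
  fsum n (fun i => if Nat.eqb i j then x else 0) = x.
Proof.
  induction n; intros H; [lia|].
  rewrite fsum_S. destruct (Nat.eq_dec j n).
  - subst. rewrite Nat.eqb_refl. rewrite fsum_ext with (g := fun _ => 0).
    + rewrite fsum_const. ring.
    + intros. destruct (Nat.eqb_spec i n); [lia|auto].
  - rewrite IHn by lia. destruct (Nat.eqb_spec n j); [lia|]. ring.
Qed.


Lemma cexpi_add a b : cexpi a * cexpi b = cexpi (a + b).
Proof.
  unfold cexpi, Cmult; simpl. rewrite cos_plus, sin_plus. f_equal; ring.
Qed.

Lemma Cmod_cexpi x : Cmod (cexpi x) = 1%R.
Proof.
  unfold Cmod, cexpi. cbn [fst snd].
  replace (cos x ^ 2 + sin x ^ 2)%R with 1%R. apply sqrt_1.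
  rewrite <- (sin2_cos2 x). unfold Rsqr. ring.
Qed.

Lemma cexpi_2piZ z : cexpi (2 * PI * IZR z) = 1.
Proof.
  destruct (Z_le_gt_dec 0 z) as [H|H].
  - rewrite <- (Z2Nat.id z H), <- INR_IZR_INZ.
    unfold cexpi. replace (2 * PI * INR (Z.to_nat z))%R with (0 + 2 * INR (Z.to_nat z) * PI)%R by ring.
    rewrite cos_period, sin_period, cos_0, sin_0. reflexivity.
  - assert (H' : (0 <= - z)%Z) by lia.
    replace (2 * PI * IZR z)%R with (- (0 + 2 * INR (Z.to_nat (-z)) * PI))%R.
    + unfold cexpi. rewrite cos_neg, sin_neg, cos_period, sin_period, cos_0, sin_0.
      unfold RtoC. f_equal. ring.
    + rewrite INR_IZR_INZ, Z2Nat.id by lia. rewrite opp_IZR. ring.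
Qed.

Lemma cexpi_per x z : cexpi (x + 2 * PI * IZR z) = cexpi x.
Proof. rewrite <- cexpi_add, cexpi_2piZ. ring. Qed.

Lemma cexpi_0 : cexpi 0 = 1.
Proof. unfold cexpi. rewrite cos_0, sin_0. reflexivity. Qed.

Lemma cexpi_neq1 (P : nat) (t : Z) : (0 < t < Z.of_nat P)%Z ->
  cexpi (2 * PI * IZR t / INR P) <> 1.
Proof.
  intros Ht E. unfold cexpi in E. injection E as Ec Es.
  assert (HP : (0 < INR P)%R) by (rewrite INR_IZR_INZ; apply IZR_lt; lia).
  assert (Htp : (IZR t < INR P)%R) by (rewrite INR_IZR_INZ; apply IZR_lt; lia).
  assert (Ht0 : (0 < IZR t)%R) by (apply IZR_lt; lia).
  set (th := (2 * PI * IZR t / INR P)%R) in *.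
  assert (H0 : (0 < th)%R).
  { unfold th. apply Rdiv_lt_0_compat; [|lra]. generalize PI_RGT_0; nra. }
  assert (H1 : (th < 2 * PI)%R).
  { unfold th. apply Rmult_lt_reg_r with (INR P); [lra|].
    unfold Rdiv. rewrite Rmult_assoc, Rinv_l by lra. generalize PI_RGT_0; nra. }
  destruct (Rtotal_order th PI) as [L|[L|L]].
  - generalize (sin_gt_0 th H0 L). lra.
  - rewrite L, cos_PI in Ec. lra.
  - generalize (sin_lt_0 th L H1). lra.
Qed.

Lemma roots_sum (P : nat) (j : Z) : (0 < P)%nat ->
  fsum P (fun r => cexpi (2 * PI * INR r * IZR j / INR P)) =
  if Z.eqb (j mod Z.of_nat P) 0 then RtoC (INR P) else 0.
Proof.
  intros HP.
  assert (HPz : (0 < Z.of_nat P)%Z) by lia.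
  assert (HPr : (INR P <> 0)%R) by (apply not_0_INR; lia).
  destruct (Z.eqb_spec (j mod Z.of_nat P) 0) as [E|E].
  - rewrite (fsum_ext _ _ (fun _ => 1)).
    + rewrite fsum_const. ring.
    + intros r _. rewrite (Z.div_mod j (Z.of_nat P)) by lia. rewrite E, Z.add_0_r.
      replace (2 * PI * INR r * IZR (Z.of_nat P * (j / Z.of_nat P)) / INR P)%R
        with (0 + 2 * PI * IZR (Z.of_nat r * (j / Z.of_nat P)))%R.
      * rewrite cexpi_per, cexpi_0. auto.
      * rewrite !mult_IZR, <- !INR_IZR_INZ. field. auto.
  - set (x := (2 * PI * IZR j / INR P)%R).
    set (term := fun r => cexpi (2 * PI * INR r * IZR j / INR P)).
    change (fsum P term = 0).
    assert (Hstep : forall r, term (S r) = cexpi x * term r).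
    { intros r. unfold term. rewrite cexpi_add. f_equal. unfold x. rewrite S_INR. field. auto. }
    assert (HP0 : term P = 1).
    { unfold term. replace (2 * PI * INR P * IZR j / INR P)%R with (0 + 2 * PI * IZR j)%R
        by (field; auto). rewrite cexpi_per, cexpi_0. auto. }
    assert (H0 : term O = 1).
    { unfold term. replace (2 * PI * INR 0 * IZR j / INR P)%R with 0%R
        by (simpl; field; auto). apply cexpi_0. }
    assert (Hg : cexpi x * fsum P term = fsum P term).
    { rewrite <- fsum_mult_l.
      rewrite (fsum_ext _ _ (fun r => term (S r))) by (intros; symmetry; apply Hstep).
      generalize (fsum_Sl P term) (fsum_S P term). rewrite HP0, H0. intros A B.
      rewrite B in A. apply (f_equal (fun z => z - 1)) in A.
      replace (fsum P term + 1 - 1) with (fsum P term) in A by ring. rewrite A. ring. }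
    assert (Hw : cexpi x <> 1).
    { unfold x. rewrite (Z.div_mod j (Z.of_nat P)) by lia.
      replace (2 * PI * IZR (Z.of_nat P * (j / Z.of_nat P) + j mod Z.of_nat P) / INR P)%R
        with (2 * PI * IZR (j mod Z.of_nat P) / INR P + 2 * PI * IZR (j / Z.of_nat P))%R.
      - rewrite cexpi_per. apply cexpi_neq1.
        generalize (Z.mod_pos_bound j (Z.of_nat P) HPz). lia.
      - rewrite plus_IZR, mult_IZR, <- INR_IZR_INZ. field. auto. }
    assert (Hw' : cexpi x - 1 <> 0).
    { intro E'. apply Hw. apply (f_equal (fun z => z + 1)) in E'.
      replace (cexpi x - 1 + 1) with (cexpi x) in E' by ring. rewrite E'. ring. }
    replace (fsum P term) with (/ (cexpi x - 1) * ((cexpi x - 1) * fsum P term)).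
    + replace ((cexpi x - 1) * fsum P term) with (cexpi x * fsum P term - fsum P term) by ring.
      rewrite Hg. ring.
    + field. auto.
Qed.


Definition cv (u : nat -> C) (v : C) : Prop :=
  is_lim_seq (fun N => fst (u N)) (fst v) /\ is_lim_seq (fun N => snd (u N)) (snd v).

Lemma cv_filterlim u v : filterlim u eventually (locally v) <-> cv u v.
Proof.
  split.
  - intros H; split; intros P [eps HP].
    + apply (H (fun z => P (fst z))). exists eps. intros y [Hy1 Hy2]; apply HP; auto.
    + apply (H (fun z => P (snd z))). exists eps. intros y [Hy1 Hy2]; apply HP; auto.
  - intros [H1 H2] P [eps HP].
    assert (E1 := H1 (ball (fst v) eps) (locally_ball _ _)).
    assert (E2 := H2 (ball (snd v) eps) (locally_ball _ _)).
    unfold filtermap in E1, E2. change (eventually (fun x => P (u x))).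
    generalize (filter_and _ _ E1 E2). apply filter_imp. intros x [A B]. apply HP. split; auto.
Qed.

Lemma cv_ext u w v : (forall N, u N = w N) -> cv u v -> cv w v.
Proof.
  intros E [H1 H2]; split; eapply is_lim_seq_ext; try eassumption; intros; simpl; rewrite E; auto.
Qed.

Lemma cv_plus u w a b : cv u a -> cv w b -> cv (fun N => u N + w N) (a + b).
Proof.
  intros [H1 H2] [H3 H4]; split; simpl.
  - apply (is_lim_seq_plus' _ _ _ _ H1 H3).
  - apply (is_lim_seq_plus' _ _ _ _ H2 H4).
Qed.

Lemma lim_scal (u : nat -> R) (l c : R) : is_lim_seq u l -> is_lim_seq (fun n => c * u n)%R (c * l)%R.
Proof. intros H. apply (is_lim_seq_scal_l _ c) in H. exact H. Qed.

Lemma cv_mult_l c u a : cv u a -> cv (fun N => c * u N) (c * a).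
Proof.
  intros [H1 H2]; destruct c as [c1 c2]; split; simpl.
  - apply is_lim_seq_minus'; apply lim_scal; auto.
  - apply is_lim_seq_plus'; apply lim_scal; auto.
Qed.

Lemma cv_mult_r c u a : cv u a -> cv (fun N => u N * c) (a * c).
Proof.
  intros H. apply (cv_ext (fun N => c * u N)); [intros; ring|].
  replace (a * c) with (c * a) by ring. apply cv_mult_l; auto.
Qed.

Lemma cv_opp u a : cv u a -> cv (fun N => - u N) (- a).
Proof.
  intros H. apply (cv_ext (fun N => (-1) * u N)); [intros; ring|].
  replace (- a) with ((-1) * a) by ring. apply cv_mult_l; auto.
Qed.

Lemma cv_const c : cv (fun _ => c) c.
Proof. split; apply is_lim_seq_const. Qed.

Lemma cv_fsum n (U : nat -> nat -> C) V :
  (forall i, (i < n)%nat -> cv (U i) (V i)) ->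
  cv (fun N => fsum n (fun i => U i N)) (fsum n V).
Proof.
  induction n; intros H.
  - rewrite fsum_0. apply (cv_ext (fun _ => 0)); [intros; rewrite fsum_0; auto|apply cv_const].
  - rewrite fsum_S. apply (cv_ext (fun N => fsum n (fun i => U i N) + U n N)).
    + intros; rewrite fsum_S; auto.
    + apply cv_plus; [apply IHn; intros; apply H; lia| apply H; lia].
Qed.

Lemma cv_Cmod0 u : is_lim_seq (fun N => Cmod (u N)) 0%R -> cv u 0.
Proof.
  intros H. assert (Ho := proj1 (is_lim_seq_opp _ _) H). simpl in Ho. rewrite Ropp_0 in Ho.
  split; apply (is_lim_seq_le_le (fun N => - Cmod (u N))%R _ (fun N => Cmod (u N))); auto;
  intros N; generalize (Rmax_Cmod (u N)); intros M;
  generalize (Rmax_l (Rabs (fst (u N))) (Rabs (snd (u N))));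
  generalize (Rmax_r (Rabs (fst (u N))) (Rabs (snd (u N))));
  intros; split.
  all: try (apply Rabs_le_between; lra).
  all: try (generalize (Rabs_le_between (fst (u N)) (Cmod (u N))); intros X; apply X; lra).
  all: try (generalize (Rabs_le_between (snd (u N)) (Cmod (u N))); intros X; apply X; lra).
Qed.

Lemma zseries_val f v : zseries_to f v -> zseries f = v.
Proof.
  unfold zseries_to. rewrite cv_filterlim. intros [H1 H2]. unfold zseries.
  rewrite (is_lim_seq_unique _ _ H1), (is_lim_seq_unique _ _ H2). simpl. destruct v; auto.
Qed.


Lemma sp_0 f : sym_partial f 0 = 0.
Proof. reflexivity. Qed.

Lemma sp_unfold f N : sym_partial f N = fsum (N + N) (fun i => f (- Z.of_nat N + Z.of_nat i)%Z).
Proof.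
  unfold sym_partial, zsum. f_equal. lia.
Qed.

Lemma sp_S f N : sym_partial f (S N) = sym_partial f N + f (- Z.of_nat (S N))%Z + f (Z.of_nat N).
Proof.
  rewrite !sp_unfold. replace (S N + S N)%nat with (S (S (N + N))) by lia.
  rewrite fsum_Sl, fsum_S.
  replace (- Z.of_nat (S N) + Z.of_nat 0)%Z with (- Z.of_nat (S N))%Z by lia.
  replace (- Z.of_nat (S N) + Z.of_nat (S (N + N)))%Z with (Z.of_nat N) by lia.
  rewrite (fsum_ext _ (fun i => f (- Z.of_nat (S N) + Z.of_nat (S i))%Z)
     (fun i => f (- Z.of_nat N + Z.of_nat i)%Z)).
  - ring.
  - intros. f_equal. lia.
Qed.

Lemma sp_plus f g N : sym_partial (fun m => f m + g m) N = sym_partial f N + sym_partial g N.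
Proof. rewrite !sp_unfold. apply fsum_plus. Qed.

Lemma sp_mult_l c f N : sym_partial (fun m => c * f m) N = c * sym_partial f N.
Proof. rewrite !sp_unfold. apply fsum_mult_l. Qed.

Lemma sp_mult_r c f N : sym_partial (fun m => f m * c) N = sym_partial f N * c.
Proof. rewrite !sp_unfold. apply fsum_mult_r. Qed.

Lemma sp_fsum n (F : nat -> Z -> C) N :
  sym_partial (fun m => fsum n (fun i => F i m)) N = fsum n (fun i => sym_partial (F i) N).
Proof. rewrite sp_unfold. rewrite fsum_swap. apply fsum_ext. intros. rewrite sp_unfold. auto. Qed.

Lemma sp_series f N : sym_partial f N = fsum N (fun i => f (Z.of_nat i) + f (- Z.of_nat (S i))%Z).
Proof.
  induction N; [auto|]. rewrite sp_S, fsum_S, IHN. ring.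
Qed.

Lemma sp_shift f N : sym_partial (fun l => f (l + 1)%Z) N = sym_partial f N - f (- Z.of_nat N)%Z + f (Z.of_nat N).
Proof.
  induction N.
  - rewrite !sp_0. simpl. ring.
  - rewrite !sp_S, IHN.
    replace (- Z.of_nat (S N) + 1)%Z with (- Z.of_nat N)%Z by lia.
    replace (Z.of_nat N + 1)%Z with (Z.of_nat (S N)) by lia. ring.
Qed.

Lemma sp_refl f N : sym_partial (fun l => f (- l)%Z) N = sym_partial f N - f (- Z.of_nat N)%Z + f (Z.of_nat N).
Proof.
  induction N.
  - rewrite !sp_0. simpl. ring.
  - rewrite !sp_S, IHN. rewrite Z.opp_involutive.
    replace (- Z.of_nat N)%Z with (- Z.of_nat N)%Z by lia. ring.
Qed.

Definition van (f : Z -> C) : Prop :=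
  forall eps, (0 < eps)%R -> exists M : Z, forall z, (M <= Z.abs z)%Z -> (Cmod (f z) < eps)%R.

Lemma van_lim f (s : Z -> Z) : van f -> (forall N : nat, Z.of_nat N <= Z.abs (s (Z.of_nat N)))%Z ->
  cv (fun N => f (s (Z.of_nat N))) 0.
Proof.
  intros H Hs. apply cv_Cmod0. apply is_lim_seq_spec. intros eps.
  destruct (H eps (cond_pos eps)) as [M HM]. exists (Z.to_nat M). intros n Hn.
  rewrite Rminus_0_r, Rabs_pos_eq by apply Cmod_ge_0. apply HM.
  specialize (Hs n). lia.
Qed.

Lemma van_shift f j : van f -> van (fun l => f (l + j)%Z).
Proof.
  intros H eps He. destruct (H eps He) as [M HM]. exists (M + Z.abs j)%Z.
  intros z Hz. apply HM. lia.
Qed.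

Lemma van_refl f : van f -> van (fun l => f (- l)%Z).
Proof.
  intros H eps He. destruct (H eps He) as [M HM]. exists M.
  intros z Hz. apply HM. lia.
Qed.

Lemma cv_shift1 f v : van f -> cv (sym_partial f) v -> cv (sym_partial (fun l => f (l + 1)%Z)) v.
Proof.
  intros Hf Hc. apply (cv_ext (fun N => sym_partial f N + - f (- Z.of_nat N)%Z + f (Z.of_nat N))).
  - intros; rewrite sp_shift; ring.
  - replace v with (v + - 0 + 0) by ring. apply cv_plus; [apply cv_plus; auto|].
    + apply cv_opp. apply (van_lim f (fun z => (- z)%Z)); auto. intros; lia.
    + apply (van_lim f (fun z => z)); auto. intros; lia.
Qed.

Lemma cv_refl f v : van f -> cv (sym_partial f) v -> cv (sym_partial (fun l => f (- l)%Z)) v.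
Proof.
  intros Hf Hc. apply (cv_ext (fun N => sym_partial f N + - f (- Z.of_nat N)%Z + f (Z.of_nat N))).
  - intros; rewrite sp_refl; ring.
  - replace v with (v + - 0 + 0) by ring. apply cv_plus; [apply cv_plus; auto|].
    + apply cv_opp. apply (van_lim f (fun z => (- z)%Z)); auto. intros; lia.
    + apply (van_lim f (fun z => z)); auto. intros; lia.
Qed.

Lemma sp_ext f g N : (forall z, f z = g z) -> sym_partial f N = sym_partial g N.
Proof. intros H. rewrite !sp_unfold. apply fsum_ext. intros; apply H. Qed.

Lemma cv_shift f v (j : nat) : van f -> cv (sym_partial f) v ->
  cv (sym_partial (fun l => f (l + Z.of_nat j)%Z)) v.
Proof.
  intros Hf Hc. induction j.
  - apply (cv_ext (sym_partial f)); auto. intros. apply sp_ext. intros; f_equal; lia.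
  - assert (H := cv_shift1 _ _ (van_shift f (Z.of_nat j) Hf) IHj).
    apply (cv_ext _ _ _ (fun N => sp_ext _ _ N (fun z => f_equal f (eq_sym (Z.add_assoc z 1 (Z.of_nat j)))))) in H.
    apply (cv_ext _ _ _ (fun N => sp_ext _ _ N (fun z => f_equal f (f_equal (Z.add z) (ltac:(lia) : (1 + Z.of_nat j = Z.of_nat (S j))%Z))))) in H.
    exact H.
Qed.

Lemma cv_reindex g v k : van g -> cv (sym_partial g) v ->
  cv (sym_partial (fun l => g (k - l)%Z)) v.
Proof.
  intros Hg Hc. destruct (Z_le_gt_dec 0 k) as [Hk|Hk].
  - assert (H1 := cv_shift g v (Z.to_nat k) Hg Hc).
    assert (H2 := cv_refl _ _ (van_shift g _ Hg) H1).
    apply (cv_ext _ _ _ (fun N => sp_ext _ _ N (fun z => f_equal g (ltac:(lia) : (- z + Z.of_nat (Z.to_nat k) = k - z)%Z)))) in H2.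
    exact H2.
  - assert (H1 := cv_refl g v Hg Hc).
    assert (H2 := cv_shift _ v (Z.to_nat (- k)) (van_refl g Hg) H1).
    apply (cv_ext _ _ _ (fun N => sp_ext _ _ N (fun z => f_equal g (ltac:(lia) : (- (z + Z.of_nat (Z.to_nat (- k))) = k - z)%Z)))) in H2.
    exact H2.
Qed.


Lemma van_bound f h : (forall z, (Cmod (h z) <= Cmod (f z))%R) -> van f -> van h.
Proof.
  intros B H eps He. destruct (H eps He) as [M HM]. exists M. intros z Hz.
  specialize (B z). specialize (HM z Hz). lra.
Qed.

Lemma van_plus f g : van f -> van g -> van (fun z => f z + g z).
Proof.
  intros Hf Hg eps He. destruct (Hf (eps/2)%R) as [M1 H1]; [lra|].
  destruct (Hg (eps/2)%R) as [M2 H2]; [lra|]. exists (Z.max M1 M2). intros z Hz.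
  generalize (Cmod_triangle (f z) (g z)). specialize (H1 z ltac:(lia)). specialize (H2 z ltac:(lia)). lra.
Qed.

Lemma van_mult_l c f : van f -> van (fun z => c * f z).
Proof.
  intros Hf eps He. assert (Hc := Cmod_ge_0 c).
  destruct (Hf (eps / (Cmod c + 1))%R) as [M HM].
  { apply Rdiv_lt_0_compat; lra. }
  exists M. intros z Hz. rewrite Cmod_mult. specialize (HM z Hz).
  assert (Hf0 := Cmod_ge_0 (f z)).
  assert (E : ((Cmod c + 1) * (eps / (Cmod c + 1)) = eps)%R) by (field; lra).
  set (d := (eps / (Cmod c + 1))%R) in *. nra.
Qed.

Lemma van_zero : van (fun _ => 0).
Proof. intros eps He. exists 0%Z. intros. rewrite Cmod_0. auto. Qed.

Lemma van_fsum n (F : nat -> Z -> C) : (forall i, (i < n)%nat -> van (F i)) ->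
  van (fun z => fsum n (fun i => F i z)).
Proof.
  induction n; intros H.
  - eapply van_bound; [|apply van_zero]. intros. rewrite fsum_0, Cmod_0; lra.
  - eapply van_bound; [|apply van_plus; [apply IHn; intros; apply H; lia| apply (H n); lia]].
    intros. rewrite fsum_S. lra.
Qed.

Lemma van_abs g : abs_summable_Z g -> van g.
Proof.
  intros [H1 H2] eps He.
  apply ex_series_lim_0, is_lim_seq_spec in H1. apply ex_series_lim_0, is_lim_seq_spec in H2.
  destruct (H1 (mkposreal eps He)) as [N1 HN1]. destruct (H2 (mkposreal eps He)) as [N2 HN2].
  simpl in *. exists (Z.of_nat (N1 + N2)). intros z Hz.
  destruct (Z_le_gt_dec 0 z).
  - specialize (HN1 (Z.to_nat z) ltac:(lia)). rewrite Z2Nat.id in HN1 by lia.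
    rewrite Rminus_0_r, Rabs_pos_eq in HN1 by apply Cmod_ge_0. auto.
  - specialize (HN2 (Z.to_nat (- z)) ltac:(lia)). rewrite Z2Nat.id, Z.opp_involutive in HN2 by lia.
    rewrite Rminus_0_r, Rabs_pos_eq in HN2 by apply Cmod_ge_0. auto.
Qed.

Lemma fst_plus (a b : C) : fst (a + b) = (fst a + fst b)%R.
Proof. reflexivity. Qed.
Lemma snd_plus (a b : C) : snd (a + b) = (snd a + snd b)%R.
Proof. reflexivity. Qed.

Lemma fsum_fst n F : fst (fsum (S n) F) = sum_n (fun i => fst (F i)) n.
Proof.
  induction n.
  - rewrite sum_O, fsum_S, fsum_0. simpl. ring.
  - rewrite sum_Sn, fsum_S, fst_plus, IHn. reflexivity.
Qed.

Lemma fsum_snd n F : snd (fsum (S n) F) = sum_n (fun i => snd (F i)) n.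
Proof.
  induction n.
  - rewrite sum_O, fsum_S, fsum_0. simpl. ring.
  - rewrite sum_Sn, fsum_S, snd_plus, IHn. reflexivity.
Qed.

Lemma abs_bound_ex g : abs_summable_Z g ->
  ex_series (fun i => Cmod (g (Z.of_nat i)) + Cmod (g (- Z.of_nat (S i))%Z))%R.
Proof.
  intros [H1 H2]. apply (ex_series_plus (fun i => Cmod (g (Z.of_nat i))) (fun i => Cmod (g (- Z.of_nat (S i))%Z))); auto.
  apply (ex_series_incr_1 (fun i => Cmod (g (- Z.of_nat i)%Z))). auto.
Qed.

Lemma zs_exists g h : abs_summable_Z g -> (forall m, (Cmod (h m) <= Cmod (g m))%R) ->
  exists v, cv (sym_partial h) v.
Proof.
  intros Hg B. assert (Hb := abs_bound_ex g Hg).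
  set (a := fun i => h (Z.of_nat i) + h (- Z.of_nat (S i))%Z).
  assert (E1 : ex_series (fun i => fst (a i))).
  { refine (@ex_series_le R_AbsRing R_CompleteNormedModule _ _ _ Hb). intros n. change (norm (fst (a n))) with (Rabs (fst (a n))).
    unfold a. rewrite fst_plus. eapply Rle_trans; [apply Rabs_triang|].
    generalize (re_le_Cmod (h (Z.of_nat n))) (re_le_Cmod (h (- Z.of_nat (S n))%Z)).
    generalize (B (Z.of_nat n)) (B (- Z.of_nat (S n))%Z). unfold Re. lra. }
  assert (E2 : ex_series (fun i => snd (a i))).
  { refine (@ex_series_le R_AbsRing R_CompleteNormedModule _ _ _ Hb). intros n. change (norm (snd (a n))) with (Rabs (snd (a n))).
    unfold a. rewrite snd_plus. eapply Rle_trans; [apply Rabs_triang|].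
    generalize (Rmax_Cmod (h (Z.of_nat n))) (Rmax_Cmod (h (- Z.of_nat (S n))%Z)).
    generalize (Rmax_r (Rabs (fst (h (Z.of_nat n)))) (Rabs (snd (h (Z.of_nat n))))).
    generalize (Rmax_r (Rabs (fst (h (- Z.of_nat (S n))%Z))) (Rabs (snd (h (- Z.of_nat (S n))%Z)))).
    generalize (B (Z.of_nat n)) (B (- Z.of_nat (S n))%Z). lra. }
  destruct E1 as [l1 L1]. destruct E2 as [l2 L2].
  exists (l1, l2). split; simpl; apply is_lim_seq_incr_1.
  - apply (is_lim_seq_ext (sum_n (fun i => fst (a i)))); [|exact L1].
    intros n. rewrite sp_series, fsum_fst. auto.
  - apply (is_lim_seq_ext (sum_n (fun i => snd (a i)))); [|exact L2].
    intros n. rewrite sp_series, fsum_snd. auto.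
Qed.


Lemma zs_cv g h : abs_summable_Z g -> (forall m, (Cmod (h m) <= Cmod (g m))%R) ->
  cv (sym_partial h) (zseries h).
Proof.
  intros Hg B. destruct (zs_exists g h Hg B) as [v Hv].
  rewrite (zseries_val h v); auto. unfold zseries_to. apply cv_filterlim. auto.
Qed.

Lemma van_mult_r c f : van f -> van (fun z => f z * c).
Proof.
  intros H. eapply van_bound; [|apply (van_mult_l c f H)]. intros. rewrite Cmult_comm. lra.
Qed.

Lemma mod_delta (P : nat) (d : Z) (n : nat) : (0 < P)%nat -> (n < P)%nat ->
  Z.eqb ((d - Z.of_nat n) mod Z.of_nat P) 0 = Nat.eqb n (Z.to_nat (d mod Z.of_nat P)).
Proof.
  intros HP Hn. assert (HPz : (0 < Z.of_nat P)%Z) by lia.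
  set (n0 := (d mod Z.of_nat P)%Z).
  assert (B := Z.mod_pos_bound d (Z.of_nat P) HPz). fold n0 in B.
  rewrite <- Zminus_mod_idemp_l. fold n0.
  rewrite <- (Z_mod_plus_full (n0 - Z.of_nat n) 1).
  destruct (Z.eq_dec n0 (Z.of_nat n)) as [E|E].
  - rewrite E. replace (Z.of_nat n - Z.of_nat n + 1 * Z.of_nat P)%Z with (1 * Z.of_nat P)%Z by lia.
    rewrite Z_mod_mult, Nat2Z.id, Nat.eqb_refl. auto.
  - destruct (Nat.eqb_spec n (Z.to_nat n0)); [lia|].
    destruct (Z_lt_le_dec n0 (Z.of_nat n)).
    + rewrite Z.mod_small by lia. apply Z.eqb_neq. lia.
    + rewrite <- (Z_mod_plus_full (n0 - Z.of_nat n + 1 * Z.of_nat P) (-1)).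
      rewrite Z.mod_small by lia. apply Z.eqb_neq. lia.
Qed.

Close Scope C_scope.

Theorem theorem1 :
  forall (Rx : Z -> Z -> C) (P : nat),
  (0 < P)%nat ->
  cyclostationary Rx P ->
  (forall n : Z, abs_summable_Z (Rx n)) ->
  forall (sigma : R), 0 <= sigma < / INR P ->
  forall (b : nat -> nat -> C) (s : nat -> C),
  (forall p p' : nat, (p < P)%nat -> (p' < P)%nat ->
     fsum P (fun q => Cmult (b p q) (Cconj (b p' q))) =
     (if Nat.eqb p p' then RtoC 1 else RtoC 0)) ->
  (forall p r : nat, (p < P)%nat -> (r < P)%nat ->
     fsum P (fun c => Cmult (cyc_psd_mx Rx P sigma r c) (b p c)) =
     Cmult (s p) (b p r)) ->
  forall (p : nat), (p < P)%nat ->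
  forall k : Z,
    zseries_to (fun l => Cmult (Rx l (k - l)%Z) (phiCS (b p) P sigma l))
               (Cmult (s p) (phiCS (b p) P sigma k)).
Proof.
  Open Scope C_scope.
  intros Rx P HP Hcs Habs sigma Hsig b s _ Heig p Hp k.
  assert (HPr : (INR P <> 0)%R) by (apply not_0_INR; lia).
  set (bp := b p).
  set (A := fun (r c n : nat) (m : Z) => Rx (Z.of_nat n) m *
     cexpi (- (2 * PI * (IZR (Z.of_nat r - Z.of_nat c) * INR n / INR P + (sigma + INR r / INR P) * IZR m)))).
  set (er := fun r : nat => cexpi (2 * PI * (sigma + INR r / INR P) * IZR k)).
  set (G := fun m => fsum P (fun r => fsum P (fun c => (RtoC (/ INR P) * fsum P (fun n => A r c n m)) * bp c) * er r)).
  set (V0 := fsum P (fun r => fsum P (fun c => (RtoC (/ INR P) * fsum P (fun n => zseries (A r c n))) * bp c) * er r)).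
  assert (HAb : forall r c n m, Cmod (A r c n m) = Cmod (Rx (Z.of_nat n) m)).
  { intros. unfold A. rewrite Cmod_mult, Cmod_cexpi. ring. }
  assert (HG : cv (sym_partial G) V0).
  { apply (cv_ext (fun N => fsum P (fun r => fsum P (fun c => (RtoC (/ INR P) * fsum P (fun n => sym_partial (A r c n) N)) * bp c) * er r))).
    - intros N. unfold G. rewrite sp_fsum. apply fsum_ext. intros r Hr.
      rewrite sp_mult_r, sp_fsum. f_equal. apply fsum_ext. intros c Hc.
      rewrite sp_mult_r, sp_mult_l, sp_fsum. auto.
    - apply cv_fsum. intros r Hr. apply cv_mult_r. apply cv_fsum. intros c Hc.
      apply cv_mult_r, cv_mult_l, cv_fsum. intros n Hn.
      apply (zs_cv (Rx (Z.of_nat n))); auto. intros. rewrite HAb. lra. }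
  assert (HV0 : V0 = s p * phiCS bp P sigma k).
  { unfold V0, phiCS. rewrite <- fsum_mult_l. apply fsum_ext. intros r Hr.
    unfold bp. rewrite Cmult_assoc, <- (Heig p r Hp Hr). unfold er. f_equal. }
  set (g := fun m => Rx (k - m)%Z m * phiCS bp P sigma (k - m)%Z).
  set (X := fun (c n : nat) (m : Z) => Rx (Z.of_nat n) m * bp c *
     cexpi (2 * PI * (sigma * IZR (k - m) + INR c * INR n / INR P))).
  assert (HGg : forall m, G m = g m).
  { intros m.
    transitivity (fsum P (fun c => fsum P (fun n => X c n m *
       (RtoC (/ INR P) * fsum P (fun r => cexpi (2 * PI * INR r * IZR (k - m - Z.of_nat n) / INR P)))))).
    - unfold G.
      rewrite (fsum_ext P _ (fun r => fsum P (fun c => fsum P (fun n =>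
          ((RtoC (/ INR P) * A r c n m) * bp c) * er r)))).
      + rewrite fsum_swap. apply fsum_ext. intros c Hc. rewrite fsum_swap. apply fsum_ext. intros n Hn.
        rewrite <- fsum_mult_l, <- fsum_mult_l. apply fsum_ext. intros r Hr.
        unfold A, X, er.
        transitivity (RtoC (/ INR P) * Rx (Z.of_nat n) m * bp c *
          (cexpi (- (2 * PI * (IZR (Z.of_nat r - Z.of_nat c) * INR n / INR P + (sigma + INR r / INR P) * IZR m))) *
           cexpi (2 * PI * (sigma + INR r / INR P) * IZR k))); [ring|].
        transitivity (RtoC (/ INR P) * Rx (Z.of_nat n) m * bp c *
          (cexpi (2 * PI * (sigma * IZR (k - m) + INR c * INR n / INR P)) *
           cexpi (2 * PI * INR r * IZR (k - m - Z.of_nat n) / INR P))); [|ring].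
        rewrite !cexpi_add. do 2 f_equal.
        rewrite !minus_IZR, <- !INR_IZR_INZ. field. auto.
      + intros r Hr. rewrite <- (fsum_mult_r P (er r)). apply fsum_ext. intros c Hc.
        rewrite <- fsum_mult_l, <- fsum_mult_r, <- fsum_mult_r. auto.
    - assert (HPz : (0 < Z.of_nat P)%Z) by lia.
      assert (Bm := Z.mod_pos_bound (k - m) (Z.of_nat P) HPz).
      set (q := ((k - m) / Z.of_nat P)%Z).
      set (n0 := Z.to_nat ((k - m) mod Z.of_nat P)).
      assert (Hn0 : Z.of_nat n0 = ((k - m) mod Z.of_nat P)%Z) by (unfold n0; lia).
      assert (Hkm : (k - m = Z.of_nat n0 + q * Z.of_nat P)%Z).
      { rewrite Hn0. unfold q. rewrite (Z.div_mod (k - m) (Z.of_nat P)) at 1 by lia. ring. }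
      assert (Hn0P : (n0 < P)%nat) by lia.
      rewrite (fsum_ext P _ (fun c => X c n0 m)).
      + unfold g, phiCS. rewrite <- fsum_mult_l. apply fsum_ext. intros c Hc. unfold X.
        replace (Rx (k - m)%Z m) with (Rx (Z.of_nat n0) m) by (rewrite Hkm; symmetry; apply Hcs).
        rewrite <- (cexpi_per _ (Z.of_nat c * q)).
        assert (E : IZR (k - m) = (INR n0 + IZR q * INR P)%R).
        { rewrite Hkm, plus_IZR, mult_IZR, <- !INR_IZR_INZ. auto. }
        rewrite E. rewrite mult_IZR, <- INR_IZR_INZ.
        replace (2 * PI * (sigma * (INR n0 + IZR q * INR P) + INR c * INR n0 / INR P) +
                 2 * PI * (INR c * IZR q))%R
          with (2 * PI * (sigma + INR c / INR P) * (INR n0 + IZR q * INR P))%R by (field; auto).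
        ring.
      + intros c Hc.
        rewrite (fsum_ext P _ (fun n => if Nat.eqb n n0 then X c n0 m else 0)).
        * apply fsum_delta; auto.
        * intros n Hn. rewrite roots_sum by auto. rewrite mod_delta by auto. fold n0.
          destruct (Nat.eqb_spec n n0).
          -- subst n. rewrite <- RtoC_mult, Rinv_l by auto. ring.
          -- ring. }
  assert (Hg : cv (sym_partial g) V0).
  { apply (cv_ext (sym_partial G)); [intros; apply sp_ext; auto | auto]. }
  assert (VG : van G).
  { unfold G. apply van_fsum. intros r Hr. apply van_mult_r. apply van_fsum. intros c Hc.
    apply van_mult_r. apply van_mult_l. apply van_fsum. intros n Hn.
    apply (van_bound (Rx (Z.of_nat n))); [intros; rewrite HAb; lra | apply van_abs; auto]. }
  assert (Vg : van g).
  { apply (van_bound G); auto. intros; rewrite HGg; lra. }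
  unfold zseries_to. apply cv_filterlim. rewrite <- HV0.
  apply (cv_ext (sym_partial (fun l => g (k - l)%Z))).
  - intros N. apply sp_ext. intros l. unfold g. replace (k - (k - l))%Z with l by ring. auto.
  - apply cv_reindex; auto.
Qed.
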